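(* Let $V$ be a finite dimensional vector space over $\mathbb{R}$. A finite subset $A$ of $V$ generates a dense subsemigroup of the additive group $V$ if and only if the following two conditions hold: (a) the convex hull of $A$ contains $0$ in its interior; (b) the zero form is the only $\mathbb{R}$-linear form $l$ on $V$ with $l(A)\subset\mathbb{Z}$. *)

(* Defs.v *)
From HB Require Import structures.
From mathcomp Require Import all_boot all_order all_algebra.
From mathcomp Require Import all_classical all_reals all_analysis.
Set Implicit Arguments. Unset Strict Implicit. Unset Printing Implicit Defensive.
Import Order.TTheory GRing.Theory Num.Theory.
Import numFieldNormedType.Exports.
Local Open Scope classical_set_scope.
Local Open Scope ring_scope.

(* V = 'rV[R]_n, R : realType, with the product (matrix) topology. *)

Inductive gen_semigroup (R : realType) (n : nat) (A : seq 'rV[R]_n)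
  : 'rV[R]_n -> Prop :=
| gen_sg_base x : x \in A -> gen_semigroup A x
| gen_sg_add x y : gen_semigroup A x -> gen_semigroup A y ->
    gen_semigroup A (x + y).

Definition conv_hull (R : realType) (n : nat) (A : seq 'rV[R]_n) : set 'rV[R]_n :=
  [set x | exists w : 'I_(size A) -> R,
     (forall i, 0 <= w i) /\ \sum_(i < size A) w i = 1 /\
     x = \sum_(i < size A) w i *: A`_i].

Definition linear_form (R : realType) (n : nat) (l : 'rV[R]_n -> R) : Prop :=
  (forall x y, l (x + y) = l x + l y) /\ (forall (a : R) x, l (a *: x) = a * l x).

(* Main.v *)
Require Import Defs.
From HB Require Import structures.
From mathcomp Require Import all_boot all_order all_algebra.
From mathcomp Require Import all_classical all_reals all_analysis.
Import Order.TTheory GRing.Theory Num.Theory.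
Import numFieldNormedType.Exports.
Local Open Scope classical_set_scope.
Local Open Scope ring_scope.
Set Implicit Arguments. Unset Strict Implicit. Unset Printing Implicit Defensive.
From mathcomp Require Import ring lra.

Lemma rv_norm_coord (R : realType) n (x : 'rV[R]_n) j : `|x 0 j| <= `|x|.
Proof.
have -> : `|x| = mx_norm x by [].
rewrite mx_normrE; exact: (le_bigmax _ _ (0, j)).
Qed.

Lemma rv_norm_le (R : realType) n (x : 'rV[R]_n) b :
  0 <= b -> (forall j, `|x 0 j| <= b) -> `|x| <= b.
Proof.
move=> b0 H; have -> : `|x| = mx_norm x by [].
rewrite mx_normrE; apply: bigmax_le => // -[i j] _ /=.
by rewrite (ord1 i).
Qed.

Lemma rv_norm_lt (R : realType) n (x : 'rV[R]_n) b :
  0 < b -> (forall j, `|x 0 j| < b) -> `|x| < b.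
Proof.
move=> b0 H; have -> : `|x| = mx_norm x by [].
rewrite mx_normrE; apply: bigmax_lt => // -[i j] _ /=.
by rewrite (ord1 i).
Qed.

Lemma mulmx_norm_le (R : realType) p n (v : 'rV[R]_p) (G : 'M[R]_(p, n)) b :
  (forall i, `|row i G| <= b) -> `|v *m G| <= (\sum_i `|v 0 i|) * b.
Proof.
move=> H; rewrite mulmx_sum_row big_distrl /=.
apply: (le_trans (ler_norm_sum _ _ _)); apply: ler_sum => i _.
by rewrite normrZ; apply: ler_wpM2l.
Qed.

Lemma sum_abs_le (R : realType) p (v : 'rV[R]_p) :
  \sum_i `|v 0 i| <= p%:R * `|v|.
Proof.
apply: (le_trans (y := \sum_(i < p) `|v|)); first by apply: ler_sum => i _; exact: rv_norm_coord.
by rewrite sumr_const card_ord mulr_natl.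
Qed.

Definition introw (R : realType) p (z : 'rV[R]_p) := forall i, z 0 i \is a Num.int.

Definition Pm (R : realType) n (A : seq 'rV[R]_n) : 'M[R]_(size A, n) :=
  \matrix_(i < size A) A`_i.

Definition Gam (R : realType) n (A : seq 'rV[R]_n) (x : 'rV[R]_n) :=
  exists z, @introw R _ z /\ x = z *m Pm A.

Lemma introw_mul (R : realType) p q (z : 'rV[R]_p) (Z : 'M[R]_(p, q)) :
  introw z -> (forall i j, Z i j \is a Num.int) -> introw (z *m Z).
Proof.
move=> Hz HZ j; rewrite mxE; apply: rpred_sum => i _; apply: rpredM => //.
Qed.

Lemma Gam_comb (R : realType) n (A : seq 'rV[R]_n) k (F : 'M[R]_(k, n)) q :
  (forall i, Gam A (row i F)) -> introw q -> Gam A (q *m F).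
Proof.
move=> HF Hq; have [f Hf] := fin_all_exists HF.
pose Zm := \matrix_i f i.
have FE : F = Zm *m Pm A.
  apply/row_matrixP => i; rewrite row_mul rowK; exact: (proj2 (Hf i)).
exists (q *m Zm); split; last by rewrite FE mulmxA.
apply: introw_mul => // i j.
by have := (proj1 (Hf i)) j; rewrite /Zm mxE.
Qed.

Lemma box_lt (R : realType) M' (f : R) : 0 <= f -> f < 1 ->
  (`|Num.floor (M'.+1%:R * f)|%N < M'.+1)%N.
Proof.
move=> f0 f1.
have z0 : 0 <= Num.floor (M'.+1%:R * f) by rewrite floor_ge0 mulr_ge0.
rewrite -ltz_nat gez0_abs // floor_lt_int.
have -> : (M'.+1 : int)%:~R = M'.+1%:R :> R by [].
by rewrite -[X in _ < X]mulr1 ltr_pM2l.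
Qed.

Lemma box_eq (R : realType) M' (f1 f2 : R) : 0 <= f1 -> 0 <= f2 ->
  `|Num.floor (M'.+1%:R * f1)|%N = `|Num.floor (M'.+1%:R * f2)|%N ->
  `|f1 - f2| < M'.+1%:R^-1.
Proof.
move=> f10 f20 H.
have z10 : 0 <= Num.floor (M'.+1%:R * f1) by rewrite floor_ge0 mulr_ge0.
have z20 : 0 <= Num.floor (M'.+1%:R * f2) by rewrite floor_ge0 mulr_ge0.
have E : Num.floor (M'.+1%:R * f1) = Num.floor (M'.+1%:R * f2).
  by rewrite -(gez0_abs z10) -(gez0_abs z20) H.
have a1 := floor_le (M'.+1%:R * f1).
have b1 := floorD1_gt (M'.+1%:R * f1).
have a2 := floor_le (M'.+1%:R * f2).
have b2 := floorD1_gt (M'.+1%:R * f2).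
rewrite E intrD in a1 b1; rewrite intrD in b2.
set Z := ((Num.floor _)%:~R) in a1 b1 a2 b2.
have M0 : 0 < M'.+1%:R :> R by rewrite ltr0n.
have : `|M'.+1%:R * f1 - M'.+1%:R * f2| < 1.
  rewrite ltr_norml; apply/andP; split; lra.
rewrite -mulrBr normrM (gtr0_norm M0) => H1.
rewrite -(ltr_pM2l M0) mulfV ?gt_eqF //.
Qed.

Lemma dirichlet (R : realType) p M' (u : 'rV[R]_p) :
  exists d : nat, (0 < d)%N /\ exists q, introw q /\
    forall i, `|d%:R * u 0 i - q 0 i| < M'.+1%:R^-1.
Proof.
pose fr (x : R) := x - (Num.floor x)%:~R.
have fr0 x : 0 <= fr x by rewrite /fr subr_ge0 floor_le.
have fr1 x : fr x < 1.
  by have := floorD1_gt x; rewrite intrD /fr => ?; lra.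
pose g (k : 'I_(M'.+1 ^ p).+1) : {ffun 'I_p -> 'I_M'.+1} :=
  [ffun i => inord (absz (Num.floor (M'.+1%:R * fr (k%:R * u 0 i))))].
have Ninj : ~ injective g.
  by move=> /leq_card; rewrite card_ffun !card_ord ltnn.
have [k1 [k2 [Hg Hne]]] : exists k1 k2, g k1 = g k2 /\ k1 <> k2.
  apply: contrapT => H; apply: Ninj => k1 k2 Hg; apply: contrapT => Hne.
  by apply: H; exists k1, k2.
have key : forall k1 k2 : 'I_(M'.+1 ^ p).+1, (k1 < k2)%N -> g k1 = g k2 ->
    exists d : nat, (0 < d)%N /\ exists q, introw q /\
    forall i, `|d%:R * u 0 i - q 0 i| < M'.+1%:R^-1.
  clear Hg Hne k1 k2 => k1 k2 lt12 Hg.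
  exists (k2 - k1)%N; split; first by rewrite subn_gt0.
  exists (\row_i ((Num.floor (k2%:R * u 0 i) - Num.floor (k1%:R * u 0 i))%:~R));
    split; first by move=> i; rewrite mxE intr_int.
  move=> i; rewrite mxE.
  have := congr1 (fun f : {ffun _ -> _} => val (f i)) Hg; rewrite /= !ffunE /= !inordK;
    try exact: box_lt.
  move=> /box_eq H.
  have {H} := H (fr0 _) (fr0 _).
  rewrite distrC /fr natrB ?(ltnW lt12) // intrB.
  by congr (`|_| < _); ring.
case: (ltngtP (nat_of_ord k1) (nat_of_ord k2)) => [H1|H1|H1]; first exact: (key k1 k2 H1 Hg).
  exact: (key k2 k1 H1 (esym Hg)).
by case: Hne; apply: val_inj.
Qed.

Lemma exists_max (P : nat -> Prop) b : P 0%N -> (forall k, P k -> (k <= b)%N) ->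
  exists k, P k /\ ~ P k.+1.
Proof.
move=> P0 Hb; apply: contrapT => H.
have all : forall k, P k.
  elim=> // k IH; apply: contrapT => Hk; apply: H; by exists k.
by have := Hb _ (all b.+1); rewrite ltnn.
Qed.

Lemma rank_add_row (R : fieldType) n m (X : 'M[R]_(m, n)) (x : 'rV[R]_n) :
  ~ (x <= X)%MS -> \rank (X + x)%MS = (\rank X).+1.
Proof.
move=> Hx; apply/eqP; rewrite eqn_leq; apply/andP; split.
  apply: (leq_trans (mxrank_adds_leqif X x)).
  by rewrite -[X in (_ <= X)%N]addn1 leq_add2l rank_leq_row.
have : (X < X + x)%MS.
  rewrite ltmxE addsmxSl /=; apply/negP => H; apply: Hx.
  exact: submx_trans (addsmxSr X x) H.
by rewrite ltmxErank => /andP[].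
Qed.

Lemma rows_col_mx (R : Type) n (Q : set 'rV[R]_n) m k (X : 'M[R]_(m, n)) (E : 'M[R]_(k, n)) :
  (forall i, Q (row i X)) -> (forall i, Q (row i E)) ->
  forall i, Q (row i (col_mx X E)).
Proof.
move=> HX HE i; case: (splitP i) => j Hj.
  have -> : i = lshift k j by apply: val_inj.
  by rewrite rowKu.
have -> : i = rshift m j by apply: val_inj.
by rewrite rowKd.
Qed.

Lemma maxext (R : realType) n (Q : set 'rV[R]_n) r (G : 'M[R]_(r, n)) :
  row_free G ->
  exists k (E : 'M[R]_(k, n)), (forall i, Q (row i E)) /\
    row_free (col_mx G E) /\ forall x, Q x -> (x <= col_mx G E)%MS.
Proof.
move=> fG.
pose Pk k := exists E : 'M[R]_(k, n), (forall i, Q (row i E)) /\ row_free (col_mx G E).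
have P0 : Pk 0%N.
  exists 0; split; first by case.
  rewrite /row_free -addsmxE addsmx0 addn0; exact: fG.
have Pb : forall k, Pk k -> (k <= n)%N.
  move=> k [E [_ fE]]; move: fE; rewrite /row_free => /eqP H.
  have := rank_leq_col (col_mx G E); rewrite H; apply: leq_trans; exact: leq_addl.
have [k [[E [QE fE]] nP]] := exists_max P0 Pb.
exists k, E; split => //; split => // x Qx.
apply: contrapT => Hx; apply: nP.
exists (col_mx x E); split.
  have Qx1 : forall i : 'I_1, Q (row i x) by move=> i; rewrite (ord1 i) row_id.
  exact: (@rows_col_mx _ n Q 1 k x E Qx1 QE).
move: fE; rewrite /row_free -!addsmxE => /eqP fE.
have -> : \rank (G + col_mx x E)%MS = \rank (G + (x + E))%MS.
  by rewrite (adds_eqmx (eqmx_refl G) (eqmx_sym (addsmxE x E))).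
rewrite addsmxA (addsmxC G x) -addsmxA addsmxC rank_add_row.
  by rewrite fE addnS.
move=> H; apply: Hx; by rewrite -addsmxE.
Qed.

Lemma kernel_vec (R : realType) p n (B : 'M[R]_(p, n)) :
  (\rank B < n)%N -> exists y : 'cV[R]_n, y != 0 /\ B *m y = 0.
Proof.
move=> rB.
pose K := kermx B^T.
have K0 : K != 0.
  rewrite -mxrank_eq0 mxrank_ker mxrank_tr -lt0n subn_gt0 //.
have [i Ki] : exists i, row i K != 0.
  apply: contrapT => H; move/negP: K0; apply; apply/eqP/row_matrixP => i.
  rewrite row0; apply/eqP; apply: contrapT => Hi; apply: H; exists i; exact/negP.
exists (row i K)^T; split.
  by apply: contra Ki => /eqP H; rewrite -[row i K]trmxK H trmx0.
by rewrite -[B]trmxK -trmx_mul -row_mul mulmx_ker row0 trmx0.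
Qed.

Lemma introw_delta (R : realType) p (i : 'I_p) : introw ('e_i : 'rV[R]_p).
Proof. by move=> j; rewrite mxE natr_int. Qed.

Lemma Gam_row (R : realType) n (A : seq 'rV[R]_n) i : Gam A (row i (Pm A)).
Proof. exists 'e_i; split; [exact: introw_delta | exact: rowE]. Qed.

Lemma Gam_sub (R : realType) n (A : seq 'rV[R]_n) x y :
  Gam A x -> Gam A y -> Gam A (x - y).
Proof.
move=> [z1 [H1 ->]] [z2 [H2 ->]]; exists (z1 - z2); split; last by rewrite mulmxBl.
by move=> i; rewrite !mxE rpredB.
Qed.

Lemma Gam_scalen (R : realType) n (A : seq 'rV[R]_n) (d : nat) x :
  Gam A x -> Gam A (d%:R *: x).
Proof.
move=> [z [H ->]]; exists (d%:R *: z); split; last by rewrite scalemxAl.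
by move=> i; rewrite !mxE rpredM // natr_int.
Qed.

Lemma dense_case (R : realType) n (A : seq 'rV[R]_n) :
  (forall d : R, 0 < d -> exists k (F : 'M[R]_(k, n)),
     (forall i, Gam A (row i F) /\ `|row i F| < d) /\ row_free F /\ row_full F) ->
  forall x e, 0 < e -> exists z, introw z /\ `|x - z *m Pm A| < e.
Proof.
move=> H x e e0.
have n0 : 0 < n.+1%:R :> R by rewrite ltr0n.
have [k [F [HF [fF uF]]]] := H (e / n.+1%:R) (divr_gt0 e0 n0).
have kn : (k <= n)%N.
  by move: fF; rewrite /row_free => /eqP <-; exact: rank_leq_col.
have /submxP [t ->] := submx_full x uF.
pose z0 := \row_i ((Num.floor (t 0 i))%:~R : R).
have Hz0 : introw z0 by move=> i; rewrite mxE intr_int.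
have [w [Hw Ew]] := Gam_comb (fun i => (HF i).1) Hz0.
exists w; split=> //; rewrite -Ew -mulmxBl.
apply: le_lt_trans (mulmx_norm_le _ (b := e / n.+1%:R) _) _.
  by move=> i; apply: ltW; exact: (HF i).2.
have S1 : \sum_i `|(t - z0) 0 i| <= k%:R.
  apply: (le_trans (y := \sum_(i < k) (1 : R))); last by rewrite sumr_const card_ord.
  apply: ler_sum => i _; rewrite !mxE.
  have a := floor_le (t 0 i); have b := floorD1_gt (t 0 i); rewrite intrD in b.
  rewrite ger0_norm; lra.
have Hkn : k%:R <= n%:R :> R by rewrite ler_nat.
have ediv : e / n.+1%:R * n%:R < e.
  rewrite mulrAC ltr_pdivrMr // ltr_pM2l //; by rewrite ltr_nat.
rewrite mulrC in ediv; apply: le_lt_trans ediv; apply: ler_pM => //.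
- by apply: sumr_ge0 => i _.
- by apply: ltW; apply: divr_gt0.
- exact: le_trans S1 Hkn.
Qed.

Lemma kronecker (R : realType) n (A : seq 'rV[R]_n) :
  (forall y : 'cV[R]_n, (forall i, (row i (Pm A) *m y) 0 0 \is a Num.int) -> y = 0) ->
  forall x e, 0 < e -> exists z, introw z /\ `|x - z *m Pm A| < e.
Proof.
move=> Hb; apply: dense_case.
apply: contrapT => /existsNP [d0 /not_implyP [d00 NF]].
have NF' : forall k (F : 'M[R]_(k, n)), (forall i, Gam A (row i F) /\ `|row i F| < d0) ->
    row_free F -> ~~ row_full F.
  move=> k F HF fF; apply/negP => uF; apply: NF; by exists k, F.
pose Q1 := fun x => Gam A x /\ `|x| < d0.
have f0 : row_free (0 : 'M[R]_(0, n)) by rewrite /row_free mxrank0.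
have [k1 [E1 [QE1 [fF1 sF1]]]] := maxext Q1 f0.
have QF1 : forall i, Q1 (row i (col_mx (0 : 'M[R]_(0, n)) E1)).
  have H0 : forall i : 'I_0, Q1 (row i (0 : 'M[R]_(0, n))) by case.
  exact: (rows_col_mx H0 QE1).
have nF1 := NF' _ _ QF1 fF1.
have [k2 [E2 [QE2 [fB sB]]]] := maxext (Gam A) fF1.
have QB : forall i, Gam A (row i (col_mx (col_mx (0 : 'M[R]_(0, n)) E1) E2)).
  exact: (rows_col_mx (fun i => (QF1 i).1) QE2).
have rowsP : forall i, exists u, row i (Pm A) = u *m col_mx (col_mx (0 : 'M[R]_(0, n)) E1) E2.
  by move=> i; apply/submxP; apply: sB; exact: Gam_row.
have [k20|k2pos] := eqVneq k2 0%N.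
  have rB : (\rank (col_mx (col_mx (0 : 'M[R]_(0, n)) E1) E2) < n)%N.
    move: fB nF1 fF1; rewrite /row_free /row_full => /eqP -> nF /eqP rF.
    rewrite k20 addn0 -rF ltn_neqAle nF rank_leq_col //.
  have [y [y0 By]] := kernel_vec rB.
  move/negP: y0; apply; apply/eqP; apply: Hb => i.
  have [u ->] := rowsP i.
  by rewrite -mulmxA By mulmx0 mxE rpred0.
have k2p : (0 < k2)%N by rewrite lt0n.
pose j0 : 'I_(0 + k1 + k2) := rshift (0 + k1) (Ordinal k2p).
set B := col_mx (col_mx (0 : 'M[R]_(0, n)) E1) E2 in fB sB QB rowsP.
have rat : forall i, exists du : nat * 'rV[R]_(0 + k1 + k2),
    (0 < du.1)%N /\ row i (Pm A) = du.2 *m B /\ du.1%:R * du.2 0 j0 \is a Num.int.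
  move=> i; have [u Hu] := rowsP i.
  pose p := (0 + k1 + k2)%N.
  pose be := \sum_j `|row j B| + 1.
  have be0 : 0 < be by rewrite /be ltr_wpDl // sumr_ge0.
  have hB : forall j, `|row j B| <= be.
    move=> j; rewrite /be (bigD1 j) //= -addrA lerDl addr_ge0 // sumr_ge0 //.
  pose M' := Num.trunc (p%:R * be / d0).
  have HM : p%:R * be / d0 < M'.+1%:R := truncnS_gt _.
  have [d [d_gt0 [q [Hq Hdq]]]] := dirichlet M' u.
  exists (d, u); split => //; split => //=.
  pose g := d%:R *: row i (Pm A) - q *m B.
  have Gg : Gam A g.
    by apply: Gam_sub; [apply: Gam_scalen; exact: Gam_row | exact: Gam_comb].
  have gE : g = (d%:R *: u - q) *m B by rewrite /g Hu scalemxAl mulmxBl.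
  have M0 : 0 < M'.+1%:R :> R by rewrite ltr0n.
  have ng : `|g| < d0.
    rewrite gE; apply: le_lt_trans (mulmx_norm_le _ hB) _.
    apply: (le_lt_trans (y := p%:R * M'.+1%:R^-1 * be)).
      apply: ler_wpM2r; first exact: ltW.
      apply: (le_trans (y := \sum_(j < p) M'.+1%:R^-1)); last by rewrite sumr_const card_ord mulr_natl.
      by apply: ler_sum => j _; rewrite !mxE; apply: ltW.
    move: HM; rewrite ltr_pdivrMr // => HM.
    by rewrite mulrAC ltr_pdivrMr // [d0 * _]mulrC.
  have /submxP [w Hw] := sF1 _ (conj Gg ng).
  have : (d%:R *: u - q) *m B = row_mx w 0 *m B.
    by rewrite -gE Hw /B mul_row_col mul0mx addr0.
  move/(row_free_inj fB) => /(congr1 (fun v : 'rV[R]_(0 + k1 + k2) => v 0 j0)).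
  rewrite /j0 row_mxEr !mxE => /eqP; rewrite subr_eq0 => /eqP ->; exact: Hq.
have [f Hf] := fin_all_exists rat.
pose N := (\prod_i (f i).1)%N.
have N0 : (0 < N)%N by apply: prodn_gt0 => i; exact: (Hf i).1.
have [Binv HBinv] := row_freeP fB.
pose y := Binv *m (N%:R *: (delta_mx j0 0 : 'cV[R]_(0 + k1 + k2))).
have y0 : y = 0.
  apply: Hb => i.
  have [_ [-> Hi]] := Hf i.
  rewrite /y -!mulmxA (mulmxA B) HBinv mul1mx -scalemxAr -colE !mxE.
  rewrite /N (bigD1 i) //= natrM mulrAC mulrC.
  apply: rpredM => //; exact: natr_int.
have : B *m y = N%:R *: delta_mx j0 0 by rewrite /y mulmxA HBinv mul1mx.
rewrite y0 mulmx0 => /(congr1 (fun v : 'cV[R]_(0 + k1 + k2) => v j0 0)); rewrite !mxE !eqxx /= mulr1.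
by move/esym/eqP; rewrite pnatr_eq0 => /eqP N00; rewrite N00 in N0.
Qed.

Lemma rowPm (R : realType) n (A : seq 'rV[R]_n) i : row i (Pm A) = A`_i.
Proof. by rewrite rowK. Qed.

Lemma gen_natmul (R : realType) n (A : seq 'rV[R]_n) a k :
  gen_semigroup A a -> gen_semigroup A (a *+ k.+1).
Proof.
move=> Ha; elim: k => [|k IH]; first by rewrite mulr1n.
by rewrite mulrS; apply: gen_sg_add.
Qed.

Lemma S_of_pos (R : realType) n (A : seq 'rV[R]_n) (k : 'rV[R]_(size A)) :
  introw k -> (forall i, 0 < k 0 i) -> (0 < size A)%N ->
  gen_semigroup A (k *m Pm A).
Proof.
move=> Hk Hp sA.
have T : forall i, gen_semigroup A (k 0 i *: row i (Pm A)).
  move=> i; have : k 0 i \is a Num.nat by rewrite natrEint Hk ltW.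
  case/natrP=> [[|c] Hc]; first by have := Hp i; rewrite Hc ltxx.
  rewrite Hc scaler_nat rowPm; apply: gen_natmul; apply: gen_sg_base.
  exact: mem_nth.
rewrite mulmx_sum_row (bigD1 (Ordinal sA)) //=.
pose S' := fun v => v = 0 \/ gen_semigroup A v.
have : S' (\sum_(i | i != Ordinal sA) k 0 i *: row i (Pm A)).
  apply: big_ind; [by left | | by move=> i _; right].
  move=> x y [->|Hx] [->|Hy]; rewrite ?addr0 ?add0r; [by left|by right|by right|].
  by right; apply: gen_sg_add.
case=> [->|H]; first by rewrite addr0.
exact: gen_sg_add.
Qed.

Lemma pos_dense (R : realType) n (A : seq 'rV[R]_n) (c : 'rV[R]_(size A)) :
  (forall i, 0 < c 0 i) -> c *m Pm A = 0 -> (0 < size A)%N ->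
  (forall x e, 0 < e -> exists z, introw z /\ `|x - z *m Pm A| < e) ->
  forall x e, 0 < e -> exists s, gen_semigroup A s /\ `|x - s| < e.
Proof.
move=> cpos cP sA Hk x e e0.
have e20 : 0 < e / 2 by rewrite divr_gt0.
have [z [Hz Hxz]] := Hk x (e / 2) e20.
pose m := size A.
pose L := \sum_i `|z 0 i|.
have L0 : 0 <= L by apply: sumr_ge0.
pose T := (L + 1) * \sum_i (c 0 i)^-1.
pose u := T *: c.
have uL : forall i, L + 1 <= u 0 i.
  move=> i; rewrite /u mxE /T -mulrA.
  rewrite -[X in X <= _]mulr1 ler_wpM2l ?addr_ge0 //.
  rewrite (bigD1 i) //= mulrDl mulVf ?gt_eqF //.
  rewrite lerDl; apply: mulr_ge0; last exact: ltW.
  by apply: sumr_ge0 => j _; rewrite invr_ge0 ltW.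
pose be := \sum_i `|row i (Pm A)| + 1.
have be0 : 0 < be by rewrite /be ltr_wpDl // sumr_ge0.
have hB : forall j, `|row j (Pm A)| <= be.
  move=> j; rewrite /be (bigD1 j) //= -addrA lerDl addr_ge0 // sumr_ge0 //.
pose M' := Num.trunc (m%:R * be / (e / 2)).
have HM : m%:R * be / (e / 2) < M'.+1%:R := truncnS_gt _.
have M0 : 0 < M'.+1%:R :> R by rewrite ltr0n.
have [d [d_gt0 [q [Hq Hdq]]]] := dirichlet M' u.
have qE : q *m Pm A = - ((d%:R *: u - q) *m Pm A).
  by rewrite mulmxBl opprB -scalemxAl /u -scalemxAl cP !scaler0 subr0.
have nq : `|q *m Pm A| < e / 2.
  rewrite qE normrN; apply: le_lt_trans (mulmx_norm_le _ hB) _.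
  apply: (le_lt_trans (y := m%:R * M'.+1%:R^-1 * be)).
    apply: ler_wpM2r; first exact: ltW.
    apply: (le_trans (y := \sum_(j < m) M'.+1%:R^-1)); last by rewrite sumr_const card_ord mulr_natl.
    apply: ler_sum => j _; rewrite !mxE; have := Hdq j; rewrite /u mxE; exact: ltW.
  move: HM; rewrite ltr_pdivrMr // => HM.
  by rewrite mulrAC ltr_pdivrMr // [_ * M'.+1%:R]mulrC.
exists ((z + q) *m Pm A); split.
  apply: S_of_pos => //.
    by move=> i; rewrite mxE rpredD.
  move=> i; rewrite mxE.
  have h1 := Hdq i; have h2 := uL i.
  have h3 : `|z 0 i| <= L by rewrite /L (bigD1 i) //= lerDl sumr_ge0.
  have h4 : 1 <= d%:R :> R by rewrite ler1n.
  have h5 : M'.+1%:R^-1 <= 1 :> R by rewrite invr_le1 // ?ler1n // unitfE gt_eqF.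
  have h6 : u 0 i <= d%:R * u 0 i by rewrite ler_peMl // (le_trans _ h2) // addr_ge0.
  move: h1; rewrite ltr_norml => /andP[h1 h1'].
  set du := d%:R * u 0 i in h1 h1' h6; set Mi := M'.+1%:R^-1 in h1 h1' h5; set ui := u 0 i in h2 h6 *; clearbody du Mi ui L.
  move: h3; case: (lerP 0 (z 0 i)) => hz; [rewrite ger0_norm // | rewrite ltr0_norm //] => h3; lra.
rewrite mulmxDl opprD addrA.
apply: le_lt_trans (ler_normD _ _) _.
rewrite normrN (splitr e); exact: ltrD.
Qed.

Lemma conv_mx (R : realType) n (A : seq 'rV[R]_n) y :
  conv_hull A y -> exists w : 'rV[R]_(size A),
    (forall i, 0 <= w 0 i) /\ \sum_i w 0 i = 1 /\ y = w *m Pm A.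
Proof.
move=> [w [w0 [w1 ->]]]; exists (\row_i w i); split; first by move=> i; rewrite mxE.
split; first by under eq_bigr do rewrite mxE.
by rewrite mulmx_sum_row; apply: eq_bigr => i _; rewrite mxE rowPm.
Qed.

Lemma mx_conv (R : realType) n (A : seq 'rV[R]_n) (w : 'rV[R]_(size A)) :
  (forall i, 0 <= w 0 i) -> \sum_i w 0 i = 1 -> conv_hull A (w *m Pm A).
Proof.
move=> w0 w1; exists (fun i => w 0 i); split => //; split => //.
by rewrite mulmx_sum_row; apply: eq_bigr => i _; rewrite rowPm.
Qed.

Lemma ball0E (R : realType) n (r : R) (y : 'rV[R]_n) : ball 0 r y = (`|y| < r).
Proof. by rewrite -ball_normE /ball_ /= sub0r normrN. Qed.

Lemma conv_pos (R : realType) n (A : seq 'rV[R]_n) :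
  nbhs (0 : 'rV[R]_n) (conv_hull A) ->
  (0 < size A)%N /\ exists c : 'rV[R]_(size A), (forall i, 0 < c 0 i) /\ c *m Pm A = 0.
Proof.
move=> /nbhs_ballP [r r0 Hr].
have Hr' : forall y, `|y| < r -> conv_hull A y by move=> y hy; apply: Hr; rewrite ball0E.
split.
  have [w [_ [w1 _]]] := conv_mx (Hr' 0 ltac:(by rewrite normr0)).
  rewrite lt0n; apply/negP => /eqP sA0.
  have F : forall i : 'I_(size A), False by move=> [i]; rewrite sA0.
  by move: w1; rewrite big1 => [/esym/eqP|i _]; [rewrite oner_eq0 | case: (F i)].
pose rho (i : 'I_(size A)) := r / (2 * (`|A`_i| + 1)).
have rho0 : forall i, 0 < rho i.
  by move=> i; rewrite divr_gt0 // mulr_gt0 // ltr_wpDl.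
have Hy : forall i : 'I_(size A), exists w : 'rV[R]_(size A), (forall j, 0 <= w 0 j) /\
    - (rho i *: A`_i) = w *m Pm A.
  move=> i.
  have : `|- (rho i *: A`_i)| < r.
    rewrite normrN normrZ gtr0_norm // /rho mulrAC ltr_pdivrMr ?mulr_gt0 ?ltr_wpDl //.
    rewrite ltr_pM2l //; have := normr_ge0 A`_i; lra.
  by move/Hr'/conv_mx => [w [w0 [_ ->]]]; exists w.
have [f Hf] := fin_all_exists Hy.
exists (\sum_i (f i + rho i *: 'e_i)); split.
  move=> j; rewrite summxE (bigD1 j) //= !mxE !eqxx /= mulr1.
  apply: ltr_wpDr; first by apply: sumr_ge0 => i _; rewrite !mxE addr_ge0 ?(proj1 (Hf i)) // mulr_ge0 // ltW.
  by rewrite ltr_wpDl // (proj1 (Hf j)).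
rewrite mulmx_suml big1 // => i _.
by rewrite mulmxDl -(proj2 (Hf i)) -scalemxAl -rowE rowPm addNr.
Qed.

Lemma Hb_of (R : realType) n (A : seq 'rV[R]_n) :
  (forall l : 'rV[R]_n -> R, linear_form l ->
      (forall a, a \in A -> l a \is a Num.int) -> forall x, l x = 0) ->
  forall y : 'cV[R]_n, (forall i, (row i (Pm A) *m y) 0 0 \is a Num.int) -> y = 0.
Proof.
move=> Hb y Hy.
have lin : linear_form (fun x : 'rV[R]_n => (x *m y) 0 0).
  by split => [x z|a x]; rewrite ?mulmxDl -?scalemxAl mxE.
have H := Hb _ lin.
have Ha : forall a, a \in A -> (a *m y) 0 0 \is a Num.int.
  move=> a aA; have := Hy (Ordinal (etrans (index_mem a A) aA)).
  by rewrite rowPm /= nth_index.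
have H2 := H Ha.
apply/matrixP => j k; rewrite (ord1 k) mxE.
by have := H2 'e_j; rewrite -rowE mxE.
Qed.

Lemma dense_of_eps (R : realType) n (S : set 'rV[R]_n) :
  (forall x e, 0 < e -> exists s, S s /\ `|x - s| < e) -> dense S.
Proof.
move=> H O [x Ox] oO.
have : nbhs x O by rewrite openE in oO; exact: oO x Ox.
move=> /nbhs_ballP [e e0 He].
have [s [Ss hs]] := H x e e0.
exists s; split => //; apply: He; by rewrite -ball_normE /ball_ /=.
Qed.

Lemma eps_of_dense (R : realType) n (S : set 'rV[R]_n) :
  dense S -> forall x e, 0 < e -> exists s, S s /\ `|x - s| < e.
Proof.
move=> H x e e0.
have [|s [Os Ss]] := H (ball x e) _ (ball_open x e).
  by exists x; apply: ballxx.
exists s; split => //; move: Os; by rewrite -ball_normE /ball_ /=.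
Qed.

Lemma int_01 (R : realType) (x : R) : x \is a Num.int -> 0 < x -> x < 1 -> False.
Proof.
case/intrP => k ->; rewrite ltr0z => k0.
have : (1 : int) <= k by [].
rewrite -(ler_int R) => H1 H2; move: (le_lt_trans H1 H2); by rewrite ltxx.
Qed.

Lemma dense_b (R : realType) n (A : seq 'rV[R]_n) :
  dense (gen_semigroup A) ->
  forall l : 'rV[R]_n -> R, linear_form l ->
      (forall a, a \in A -> l a \is a Num.int) -> forall x, l x = 0.
Proof.
move=> /eps_of_dense Hd l [ladd lscal] Hint x.
have l0 : l 0 = 0 by have := lscal 0 0; rewrite scale0r mul0r.
have lN : forall a, l (- a) = - l a.
  by move=> a; rewrite -scaleN1r lscal mulN1r.
have lB : forall a b, l (a - b) = l a - l b by move=> a b; rewrite ladd lN.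
have lrep : forall y, l y = \sum_j y 0 j * l 'e_j.
  move=> y; rewrite {1}(row_sum_delta y) (big_morph l ladd l0).
  by apply: eq_bigr => j _; rewrite lscal.
pose K := \sum_(j < n) `|l 'e_j|.
have K0 : 0 <= K by apply: sumr_ge0.
have lbd : forall y, `|l y| <= K * `|y|.
  move=> y; rewrite lrep; apply: le_trans (ler_norm_sum _ _ _) _.
  rewrite /K mulr_suml; apply: ler_sum => j _; rewrite normrM mulrC.
  by apply: ler_wpM2l => //; exact: rv_norm_coord.
have lS : forall s, gen_semigroup A s -> l s \is a Num.int.
  by move=> s; elim => [y /Hint //| y z _ Hy _ Hz]; rewrite ladd rpredD.
apply: contrapT => lx0.
pose z := (2 * l x)^-1 *: x.
have lz : l z = 2^-1.
  rewrite /z lscal invfM -mulrA mulVf ?mulr1 //; by apply/eqP.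
have e0 : 0 < (2 * (K + 1))^-1 by rewrite invr_gt0 mulr_gt0 // ltr_wpDl.
have [s [Ss hs]] := Hd z _ e0.
have h1 : `|l z - l s| < 2^-1.
  rewrite -lB; apply: le_lt_trans (lbd _) _.
  apply: (le_lt_trans (y := K * (2 * (K + 1))^-1)).
    by apply: ler_wpM2l => //; exact: ltW.
  rewrite invfM mulrCA gtr_pMr ?invr_gt0 // ltr_pdivrMr ?ltr_wpDl // mul1r.
  lra.
apply: (int_01 (lS _ Ss)); move: h1; rewrite lz ltr_norml => /andP[? ?]; lra.
Qed.

Lemma sum_delta (R : realType) p (i : 'I_p) : \sum_j ('e_i : 'rV[R]_p) 0 j = 1.
Proof.
rewrite (bigD1 i) //= mxE !eqxx /= big1 ?addr0 // => j ji.
by rewrite mxE eqxx /= (negbTE ji).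
Qed.

Lemma S_cone (R : realType) n (A : seq 'rV[R]_n) s : gen_semigroup A s ->
  exists k : 'rV[R]_(size A), (forall i, 0 <= k 0 i) /\ 1 <= \sum_i k 0 i /\ s = k *m Pm A.
Proof.
elim => [a aA | a b _ [k1 [h1 [s1 ->]]] _ [k2 [h2 [s2 ->]]]].
  pose i := Ordinal (etrans (index_mem a A) aA).
  exists 'e_i; split; first by move=> j; rewrite mxE ler0n.
  split; first by rewrite sum_delta.
  by rewrite -rowE rowPm /= nth_index.
exists (k1 + k2); split; first by move=> i; rewrite mxE addr_ge0.
split; last by rewrite mulmxDl.
under eq_bigr do rewrite mxE.
rewrite big_split /=; lra.
Qed.

Lemma cone_all (R : realType) n (A : seq 'rV[R]_n) :
  dense (gen_semigroup A) ->
  forall x, exists c : 'rV[R]_(size A), (forall i, 0 <= c 0 i) /\ x = c *m Pm A.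
Proof.
move=> /eps_of_dense Hd x.
pose eta : R := 4^-1 / n.+1%:R.
have n10 : 0 < n.+1%:R :> R by rewrite ltr0n.
have eta0 : 0 < eta by rewrite divr_gt0.
have etaN : eta * n.+1%:R = 4^-1 by rewrite /eta mulfVK ?gt_eqF.
have etaN' : n%:R * eta + eta = 4^-1 by rewrite -etaN -natr1 mulrDr mulr1 mulrC.
have etap : 0 <= n%:R * eta by rewrite mulr_ge0 // ltW.
have eta1 : eta <= 4^-1 by lra.
have etan : n%:R * eta <= 4^-1 by lra.
have [sf Hsf] := fin_all_exists (fun j : 'I_n => Hd 'e_j eta eta0).
have [s' [Ss' hs']] := Hd (- const_mx 1) eta eta0.
have [kf Hkf] := fin_all_exists (fun j : 'I_n => S_cone (proj1 (Hsf j))).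
have [k' [hk' [_ Ek']]] := S_cone Ss'.
pose M : 'M[R]_n := \matrix_j sf j.
pose Kmat := \matrix_j kf j.
have HMK : M = Kmat *m Pm A.
  apply/row_matrixP => j; rewrite row_mul !rowK.
  by case: (Hkf j) => _ [_ ->].
pose E := M - 1%:M.
have rowE_b : forall i, `|row i E| <= eta.
  move=> i; rewrite !rowE mulmxBr -!rowE rowK row1 distrC.
  exact: ltW (proj2 (Hsf i)).
have nE : forall v : 'rV[R]_n, `|v *m E| <= (n%:R * eta) * `|v|.
  move=> v; apply: le_trans (mulmx_norm_le _ rowE_b) _.
  rewrite mulrAC; apply: ler_wpM2r; first exact: ltW.
  exact: sum_abs_le.
have ME : M = 1%:M + E by rewrite /E addrC subrK.
have vM : forall v : 'rV[R]_n, v *m M = v + v *m E by move=> v; rewrite ME mulmxDr mulmx1.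
have Minj : forall v : 'rV[R]_n, v *m M = 0 -> v = 0.
  move=> v; rewrite vM => /eqP; rewrite addr_eq0 => /eqP hv.
  have : `|v| <= 4^-1 * `|v|.
    rewrite {1}hv normrN; apply: le_trans (nE v) _.
    by apply: ler_wpM2r.
  move=> h; apply/eqP; rewrite -normr_le0.
  have := normr_ge0 v; lra.
have uM : M \in unitmx by rewrite -row_free_unit; apply: inj_row_free.
pose c0 := (- s') *m invmx M.
have c0M : c0 *m M = - s' by rewrite /c0 mulmxKV.
pose one : 'rV[R]_n := const_mx 1.
have none : `|one| <= 1 by apply: rv_norm_le => // j; rewrite mxE normr1.
pose t := `|c0 - one|.
have ht : t <= 3^-1 * 2.
  have e1 : c0 - one = (- s' - one) - c0 *m E.
    by rewrite -c0M vM addrAC addrK.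
  have h1 : t <= eta + (n%:R * eta) * `|c0|.
    rewrite /t e1; apply: le_trans (ler_normB _ _) _; apply: lerD; last exact: nE.
    by rewrite /one addrC; apply: ltW.
  have h2 : `|c0| <= 1 + t.
    have -> : c0 = one + (c0 - one) by rewrite addrC subrK.
    by apply: le_trans (ler_normD _ _) _; apply: lerD.
  have h3 : (n%:R * eta) * `|c0| <= 4^-1 * (1 + t).
    apply: le_trans (ler_wpM2r (normr_ge0 _) etan) _.
    by apply: ler_wpM2l.
  lra.
have c0pos : forall j, 3^-1 <= c0 0 j.
  move=> j; have := le_trans (rv_norm_coord (c0 - one) j) ht.
  rewrite !mxE ler_norml => /andP[h _]; lra.
pose c := x *m invmx M.
have cM : c *m M = x by rewrite /c mulmxKV.
clearbody c c0.
pose tau := 3 * `|c|.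
pose d := c + tau *: c0.
have d0 : forall j, 0 <= d 0 j.
  move=> j; rewrite !mxE.
  have h1 : tau * 3^-1 <= tau * c0 0 j by apply: ler_wpM2l => //; rewrite mulr_ge0.
  have h2 := rv_norm_coord c j.
  move: h2; rewrite ler_norml => /andP[h2 _].
  have : tau * 3^-1 = `|c| by rewrite /tau mulrAC mulfV ?mul1r.
  lra.
exists (d *m Kmat + tau *: k'); split.
  move=> i; rewrite !mxE; apply: addr_ge0; last by rewrite mulr_ge0 // mulr_ge0.
  apply: sumr_ge0 => j _; rewrite mxE; apply: mulr_ge0.
    by have := d0 j; rewrite !mxE.
  by rewrite /Kmat mxE; case: (Hkf j) => h _; apply: h.
rewrite mulmxDl -mulmxA -HMK -scalemxAl -Ek' /d mulmxDl -scalemxAl c0M cM.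
by rewrite scalerN subrK.
Qed.

Lemma dense_a (R : realType) n (A : seq 'rV[R]_n) :
  dense (gen_semigroup A) -> nbhs (0 : 'rV[R]_n) (conv_hull A).
Proof.
move=> Hd; have Hc := cone_all Hd.
have [s0 [_ Ss0]] := Hd setT (ex_intro _ 0 I) openT.
have [k0 [hk0 [sk0 Ek0]]] := S_cone Ss0.
have [c1 [hc1 Ec1]] := Hc (- s0).
pose w0' := k0 + c1.
pose sg := \sum_i w0' 0 i.
have sg1 : 1 <= sg.
  rewrite /sg; under eq_bigr do rewrite mxE.
  rewrite big_split /=; have : 0 <= \sum_i c1 0 i by apply: sumr_ge0.
  lra.
have sg0 : 0 < sg by lra.
pose w0 := sg^-1 *: w0'.
have w0pos : forall i, 0 <= w0 0 i.
  by move=> i; rewrite !mxE mulr_ge0 ?addr_ge0 // invr_ge0 ltW.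
have w0sum : \sum_i w0 0 i = 1.
  rewrite /w0; under eq_bigr do rewrite mxE.
  by rewrite -mulr_sumr -/sg mulVf // gt_eqF.
have w0P : w0 *m Pm A = 0.
  by rewrite -scalemxAl mulmxDl -Ek0 -Ec1 subrr scaler0.
have [pf Hpf] := fin_all_exists (fun j : 'I_n => Hc 'e_j).
have [qf Hqf] := fin_all_exists (fun j : 'I_n => Hc (- 'e_j)).
pose B1 := \sum_j (\sum_i pf j 0 i + \sum_i qf j 0 i).
have sp0 : forall j, 0 <= \sum_i pf j 0 i by move=> j; apply: sumr_ge0 => i _; exact: (Hpf j).1.
have sq0 : forall j, 0 <= \sum_i qf j 0 i by move=> j; apply: sumr_ge0 => i _; exact: (Hqf j).1.
have B10 : 0 <= B1 by apply: sumr_ge0 => j _; apply: addr_ge0.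
have B0 : 0 < B1 + 1 by lra.
apply/nbhs_ballP; exists (B1 + 1)^-1; first by rewrite /= invr_gt0.
move=> y; rewrite ball0E => hy.
have hy' : `|y| * B1 + `|y| < 1 by move: hy; rewrite -[(B1 + 1)^-1]mul1r ltr_pdivlMr // mulrDr mulr1.
pose a j := (`|y 0 j| + y 0 j) / 2.
pose b j := (`|y 0 j| - y 0 j) / 2.
have ab : forall j, 0 <= a j /\ 0 <= b j /\ a j <= `|y| /\ b j <= `|y| /\ a j - b j = y 0 j.
  move=> j; have h := rv_norm_coord y j.
  have : - `|y 0 j| <= y 0 j <= `|y 0 j| by rewrite -ler_norml.
  move=> /andP[h1 h2]; rewrite /a /b; split; [|split; [|split; [|split]]]; lra.
pose C := \sum_j (a j *: pf j + b j *: qf j).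
have Cpos : forall i, 0 <= C 0 i.
  move=> i; rewrite summxE; apply: sumr_ge0 => j _; rewrite !mxE.
  have [h1 [h2 _]] := ab j.
  by apply: addr_ge0; apply: mulr_ge0 => //; [exact: (Hpf j).1 | exact: (Hqf j).1].
have CP : C *m Pm A = y.
  rewrite mulmx_suml [RHS]row_sum_delta; apply: eq_bigr => j _.
  rewrite mulmxDl -!scalemxAl -(Hpf j).2 -(Hqf j).2.
  have [_ [_ [_ [_ h]]]] := ab j.
  by rewrite scalerN -scalerBl h.
pose sC := \sum_i C 0 i.
have sCE : sC = \sum_j (a j * \sum_i pf j 0 i + b j * \sum_i qf j 0 i).
  rewrite /sC; under eq_bigr do rewrite summxE.
  rewrite exchange_big /=; apply: eq_bigr => j _.
  rewrite !mulr_sumr -big_split /=; apply: eq_bigr => i _.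
  by rewrite !mxE.
have sC0 : 0 <= sC by apply: sumr_ge0 => i _.
have sC1 : sC <= 1.
  have : sC <= `|y| * B1.
    rewrite sCE /B1 mulr_sumr; apply: ler_sum => j _.
    have [h1 [h2 [h3 [h4 _]]]] := ab j.
    rewrite mulrDr; apply: lerD; apply: ler_wpM2r => //.
  have := normr_ge0 y; nra.
have -> : y = (C + (1 - sC) *: w0) *m Pm A.
  by rewrite mulmxDl -scalemxAl w0P scaler0 addr0.
apply: mx_conv.
  move=> i; rewrite mxE [X in _ + X]mxE; apply: addr_ge0 => //; apply: mulr_ge0 => //; lra.
under eq_bigr do rewrite mxE [X in _ + X]mxE.
by rewrite big_split /= -mulr_sumr w0sum mulr1 -/sC addrC subrK.
Qed.

Unset Implicit Arguments.

Theorem corollary4p4 (R : realType) (n : nat) (A : seq 'rV[R]_n) :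
  @dense 'rV[R]_n (gen_semigroup A) <->
  (@interior 'rV[R]_n (conv_hull A) 0 /\
   (forall l : 'rV[R]_n -> R, linear_form l ->
      (forall a, a \in A -> l a \is a Num.int) -> forall x, l x = 0)).
Proof.
split.
  move=> Hd; split; [exact: dense_a | exact: dense_b].
move=> [Ha Hb].
have [sA [c [cpos cP]]] := conv_pos Ha.
apply: dense_of_eps.
exact: (pos_dense cpos cP sA (kronecker (Hb_of Hb))).
Qed.
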